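(* Let $N\ge3$ be an integer and $s\in\mathbb{R}$. Define $H=H_{int}^N(s)=(h_1,\dots,h_N)$ by $h_1=s$, $h_{n+2}=(s^2-1)s^n$ for $n=0,1,\dots,N-3$, and $h_N=-s^{N-2}$ (with $s^0=1$). Then the aperiodic auto-correlation $A_d=\sum_i h_ih_{i+d}$ (with $h_k=0$ for $k\notin\{1,\dots,N\}$) satisfies $A_0=1+s^{2N-2}$, $A_{N-1}=A_{-(N-1)}=-s^{N-1}$, and $A_d=0$ for all $0<|d|<N-1$. In particular, for integer $s$ the array is integer-valued. *)

(* Defs.v *)
From mathcomp Require Import all_boot all_order all_algebra.
From mathcomp Require Import reals.
Set Implicit Arguments. Unset Strict Implicit. Unset Printing Implicit Defensive.
Import Order.TTheory GRing.Theory Num.Theory.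
Local Open Scope ring_scope.

Definition Hint {R : ringType} (N : nat) (s : R) (k : int) : R :=
  match k with
  | Posz n =>
      if n == 1%N then s
      else if n == N then - s ^+ (N - 2)
      else if (2 <= n <= N - 1)%N then (s ^+ 2 - 1) * s ^+ (n - 2)
      else 0
  | Negz _ => 0
  end.

(* Aperiodic auto-correlation A_d = sum_i h_i h_{i+d}; since h vanishes
   outside {1..N} it suffices to sum over i = 1..N. *)
Definition acorr {R : ringType} (h : int -> R) (N : nat) (d : int) : R :=
  \sum_(i < N) h (Posz i.+1) * h (Posz i.+1 + d).

(* Main.v *)
Require Import Defs.
From mathcomp Require Import all_boot all_order all_algebra.
From mathcomp Require Import reals.
From mathcomp Require Import ring lra zify.
Import Order.TTheory GRing.Theory Num.Theory.
Local Open Scope ring_scope.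

Section Aux.
Variables (R : realType) (N : nat) (s : R).
Hypothesis hN : (3 <= N)%N.

Local Notation f k := (Hint N s (Posz k)).

Lemma f0 : f 0 = 0.
Proof. rewrite /Hint /=; case: N hN => [|[|[|n]]] //. Qed.

Lemma f1 : f 1 = s.
Proof. by rewrite /Hint eqxx. Qed.

Lemma fN : f N = - s ^+ (N - 2).
Proof. rewrite /Hint eqxx; case: (N =P 1%N) => // e; move: hN; by rewrite e. Qed.

Lemma fmid k : (2 <= k <= N - 1)%N -> f k = (s ^+ 2 - 1) * s ^+ (k - 2).
Proof.
move=> hk; rewrite /Hint hk.
have -> : (k == 1%N) = false by apply/eqP; lia.
have -> : (k == N) = false by apply/eqP; lia.
done.
Qed.

Lemma fbig k : (N < k)%N -> f k = 0.
Proof.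
move=> hk; rewrite /Hint.
have -> : (k == 1%N) = false by apply/eqP; lia.
have -> : (k == N) = false by apply/eqP; lia.
have -> : (2 <= k <= N - 1)%N = false by apply/negbTE; lia.
done.
Qed.

Lemma fnonpos (z : int) : z <= 0 -> Hint N s z = 0.
Proof.
case: z => [n|n] //=; rewrite lez_nat leqn0 => /eqP ->; exact: f0.
Qed.

Lemma geom (k : nat) :
  (s ^+ 2 - 1) * \sum_(0 <= i < k) (s ^+ 2) ^+ i = s ^+ (2 * k) - 1.
Proof.
elim: k => [|k IH]; first by rewrite big_geq // mulr0 muln0 expr0 subrr.
rewrite big_nat_recr //= mulrDr IH mulnS exprD -exprM; ring.
Qed.

Lemma acorr_pos (m : nat) : (m <= N)%N ->
  acorr (Hint N s) N (Posz m) = \sum_(0 <= i < N - m) f i.+1 * f (i.+1 + m).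
Proof.
move=> hm; rewrite /acorr -(big_mkord xpredT (fun i => f i.+1 * Hint N s (Posz i.+1 + Posz m))).
rewrite (big_cat_nat _ (n := N - m)) //; last lia.
rewrite -[Algebra.Algebra_add__canonical__Monoid_Law R _ _]/(_ + _).
rewrite [\sum_(N - m <= i < N) _]big1_seq ?addr0; last first.
  move=> i; rewrite mem_index_iota => /andP [_ /andP [h1 _]].
  by rewrite (fbig (i.+1 + m)%N) ?mulr0 //; lia.
by apply: eq_bigr => i _.
Qed.

Lemma acorr_neg (m : nat) : (m <= N)%N ->
  acorr (Hint N s) N (- Posz m) = acorr (Hint N s) N (Posz m).
Proof.
move=> hm; rewrite acorr_pos // /acorr.
rewrite -(big_mkord xpredT (fun i => f i.+1 * Hint N s (Posz i.+1 + - Posz m))).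
rewrite (big_cat_nat _ (n := m)) //.
rewrite -[Algebra.Algebra_add__canonical__Monoid_Law R _ _]/(_ + _).
rewrite big1_seq ?add0r; last first.
  move=> i; rewrite mem_index_iota => /andP [_ /andP [_ h1]].
  rewrite (fnonpos (Posz i.+1 - Posz m)) ?mulr0 //.
  rewrite subr_le0 lez_nat; lia.
rewrite (big_addn 0 N m).
apply: eq_bigr => i _.
have -> : Posz (i + m).+1 + - Posz m = Posz i.+1.
  by rewrite -addSn PoszD addrK.
by rewrite mulrC addSn addnC.
Qed.


Lemma sum_ends (F : nat -> R) n k : n = k.+2 ->
  \sum_(0 <= i < n) F i = F 0%N + \sum_(0 <= i < k) F i.+1 + F k.+1.
Proof. by move=> ->; rewrite big_nat_recr // big_nat_recl. Qed.

Lemma acorr0 : acorr (Hint N s) N 0 = 1 + s ^+ (2 * N - 2).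
Proof.
have [k eN] : exists k, N = k.+2 by exists (N - 2)%N; lia.
change (acorr (Hint N s) N (Posz 0) = 1 + s ^+ (2 * N - 2)).
rewrite (acorr_pos 0%N) // subn0 (sum_ends _ _ _ eN).
rewrite f1.
have -> : \sum_(0 <= i < k) f i.+2 * f (i.+2 + 0) =
          (s ^+ 2 - 1) * ((s ^+ 2 - 1) * \sum_(0 <= i < k) (s ^+ 2) ^+ i).
  rewrite !mulr_sumr big_nat_cond [RHS]big_nat_cond; apply: eq_bigr => i /andP [/andP [_ hi] _].
  rewrite addn0 fmid; last lia.
  have -> : (i.+2 - 2 = i)%N by lia.
  by rewrite -exprM mulnC exprM; ring.
rewrite geom.
rewrite addn0.
have -> : f k.+2 = - s ^+ k.
  by rewrite -eN fN; congr (- s ^+ _); lia.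
have -> : (2 * N - 2 = 2 * k + 2)%N by lia.
rewrite exprD !(mulnC 2) !exprM; ring.
Qed.

Lemma acorrN1 : acorr (Hint N s) N (Posz (N - 1)) = - s ^+ (N - 1).
Proof.
rewrite acorr_pos; last lia.
have -> : (N - (N - 1) = 1)%N by lia.
rewrite big_nat1 f1.
have -> : (1 + (N - 1) = N)%N by lia.
rewrite fN mulrN -exprS; congr (- s ^+ _); lia.
Qed.

Lemma acorr_mid m : (0 < m < N - 1)%N -> acorr (Hint N s) N (Posz m) = 0.
Proof.
move=> hm.
have [p ep] : exists p, m = p.+1 by exists (m - 1)%N; lia.
have [k ek] : exists k, (N - m = k.+2)%N by exists (N - m - 2)%N; lia.
rewrite acorr_pos; last lia.
rewrite (sum_ends _ _ _ ek) f1.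
have -> : f (1 + m) = (s ^+ 2 - 1) * s ^+ p.
  rewrite fmid; last lia. congr (_ * s ^+ _); lia.
have -> : f k.+2 = (s ^+ 2 - 1) * s ^+ k.
  rewrite fmid; last lia. congr (_ * s ^+ _); lia.
have -> : f (k.+2 + m) = - (s ^+ k * s ^+ m).
  have -> : (k.+2 + m = N)%N by lia.
  rewrite fN -exprD; congr (- s ^+ _); lia.
have -> : \sum_(0 <= i < k) f i.+2 * f (i.+2 + m) =
          (s ^+ 2 - 1) * s ^+ m * ((s ^+ 2 - 1) * \sum_(0 <= i < k) (s ^+ 2) ^+ i).
  rewrite !mulr_sumr big_nat_cond [RHS]big_nat_cond; apply: eq_bigr => i /andP [/andP [_ hi] _].
  rewrite fmid; last lia.
  rewrite fmid; last lia.
  have -> : (i.+2 - 2 = i)%N by lia.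
  have -> : (i.+2 + m - 2 = i + m)%N by lia.
  by rewrite exprD -exprM (mulnC 2 i) exprM; ring.
rewrite geom ep (exprS s p) (mulnC 2 k) exprM; ring.
Qed.
End Aux.

Theorem mainTheorem8 (R : realType) (N : nat) (s : R) (hN : (3 <= N)%N) :
  acorr (Hint N s) N 0 = 1 + s ^+ (2 * N - 2)
  /\ acorr (Hint N s) N (Posz (N - 1)) = - s ^+ (N - 1)
  /\ acorr (Hint N s) N (- Posz (N - 1)) = - s ^+ (N - 1)
  /\ (forall d : int, 0 < `|d| < Posz (N - 1) -> acorr (Hint N s) N d = 0)
  /\ (s \is a Num.int -> forall k : int, Hint N s k \is a Num.int).
Proof.
split; first exact: (@acorr0 R N s hN).
split; first exact: (@acorrN1 R N s hN).
split; first by rewrite (@acorr_neg R N s hN) ?(@acorrN1 R N s hN) //; lia.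
split.
  case=> [m|q].
    rewrite /= !ltz_nat => hm; exact: (@acorr_mid R N s hN).
  rewrite NegzE /= !ltz_nat => hq.
  rewrite (@acorr_neg R N s hN); last lia.
  exact: (@acorr_mid R N s hN).
move=> si; case=> [n|n] /=; last exact: rpred0.
case: ifP => _ //; case: ifP => _; first by rewrite rpredN rpredX.
case: ifP => _; last exact: rpred0.
by apply: rpredM; [apply: rpredB; [apply: rpredX|apply: rpred1] | apply: rpredX].
Qed.
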